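(* Let $A$, $B$, $D$ be finitely generated lattices, and assume $D$ has a finite generating set $P$ for which $D$ satisfies Dean's condition (D). If $g\colon A\to D$ and $h\colon B\to D$ are bounded lattice epimorphisms, then their fiber product $C=\{(a,b)\in A\times B : g(a)=h(b)\}$ is a finitely generated sublattice of $A\times B$.
   Context: A lattice homomorphism $g\colon A\to D$ is lower bounded if for every $d\in D$ the set $\{x\in A : g(x)\ge d\}$ is either empty or has a least element; it is upper bounded if for every $d\in D$ the set $\{x\in A : g(x)\le d\}$ is either empty or has a greatest element; it is bounded if it is both lower and upper bounded. A lattice $D$ with finite generating set $P$ satisfies Dean's condition (D) (for $P$) if for all finite subsets $S,T\subseteq D$ with $\bigwedge S\le\bigvee T$ at least one of the following holds: there is $s\in S$ with $s\le\bigvee T$; there is $t\in T$ with $\bigwedge S\le t$; there is $p\in P$ with $\bigwedge S\le p\le\bigvee T$. (In a finitely generated lattice the empty meet is the top and the empty join is the bottom element.) The fiber product of epimorphisms $g\colon A\to D$, $h\colon B\to D$ is the sublattice $\{(a,b)\in A\times B: g(a)=h(b)\}$ of $A\times B$. *)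

(* Defs.v *)
From HB Require Import structures.
From Stdlib Require Import List.
From mathcomp Require Import all_boot all_order.
Set Implicit Arguments. Unset Strict Implicit. Unset Printing Implicit Defensive.
Import Order.TTheory.
Local Open Scope order_scope.

Inductive genby (T : Type) (m j : T -> T -> T) (s : seq T) : T -> Prop :=
  | genby_base x : In x s -> genby m j s x
  | genby_meet x y : genby m j s x -> genby m j s y -> genby m j s (m x y)
  | genby_join x y : genby m j s x -> genby m j s y -> genby m j s (j x y).

Definition lattice_generated_by (d : Order.disp_t) (L : latticeType d)
    (P : seq L) : Prop :=
  forall x : L, genby Order.meet Order.join P x.

Definition fg_lattice (d : Order.disp_t) (L : latticeType d) : Prop :=
  exists P : seq L, lattice_generated_by P.

Definition lattice_hom (d1 d2 : Order.disp_t) (A : latticeType d1)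
    (D : latticeType d2) (g : A -> D) : Prop :=
  (forall x y, g (x `&` y) = g x `&` g y) /\
  (forall x y, g (x `|` y) = g x `|` g y).

Definition lattice_epi (d1 d2 : Order.disp_t) (A : latticeType d1)
    (D : latticeType d2) (g : A -> D) : Prop :=
  lattice_hom g /\ (forall y : D, exists x : A, g x = y).

Definition lower_bounded (d1 d2 : Order.disp_t) (A : latticeType d1)
    (D : latticeType d2) (g : A -> D) : Prop :=
  forall dd : D,
    (forall x : A, ~ (dd <= g x)) \/
    (exists x0 : A, dd <= g x0 /\ forall x : A, dd <= g x -> x0 <= x).

Definition upper_bounded (d1 d2 : Order.disp_t) (A : latticeType d1)
    (D : latticeType d2) (g : A -> D) : Prop :=
  forall dd : D,
    (forall x : A, ~ (g x <= dd)) \/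
    (exists x0 : A, g x0 <= dd /\ forall x : A, g x <= dd -> x <= x0).

Definition bounded_hom (d1 d2 : Order.disp_t) (A : latticeType d1)
    (D : latticeType d2) (g : A -> D) : Prop :=
  lower_bounded g /\ upper_bounded g.

(* Dean's condition (D) for the finite set P in the lattice D (which has
   top and bottom, used as empty meet / empty join). *)
Definition dean_condition (d : Order.disp_t) (D : tbLatticeType d)
    (P : seq D) : Prop :=
  forall S T : seq D,
    \meet_(s <- S) s <= \join_(t <- T) t ->
    (exists2 s, In s S & s <= \join_(t <- T) t) \/
    (exists2 t, In t T & \meet_(s <- S) s <= t) \/
    (exists2 p, In p P &
        (\meet_(s <- S) s <= p) && (p <= \join_(t <- T) t)).

Definition fiber_product_fg (d1 d2 d3 : Order.disp_t) (A : latticeType d1)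
    (B : latticeType d2) (D : latticeType d3) (g : A -> D) (h : B -> D) : Prop :=
  exists Q : seq (A * B),
    (forall q, In q Q -> g q.1 = h q.2) /\
    (forall c : A * B,
        g c.1 = h c.2 <->
        genby (fun x y => (x.1 `&` y.1, x.2 `&` y.2))
              (fun x y => (x.1 `|` y.1, x.2 `|` y.2)) Q c).

(* Main.v *)
Require Import Defs.
From HB Require Import structures.
From Stdlib Require Import List ClassicalEpsilon.
From mathcomp Require Import all_boot all_order.
Set Implicit Arguments. Unset Strict Implicit. Unset Printing Implicit Defensive.
Import Order.TTheory.
Local Open Scope order_scope.

Lemma InE (T : eqType) (x : T) (s : seq T) : In x s <-> x \in s.
Proof.
elim: s => [|y s IH] //=; rewrite in_cons; split.
- by case=> [->|/IH H]; [rewrite eqxx | rewrite H orbT].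
- by case/orP=> [/eqP->|H]; [left | right; apply/IH].
Qed.

Section Fold.
Variables (dA dB : Order.disp_t) (A : latticeType dA) (B : latticeType dB).
Definition mp (x y : A * B) := (x.1 `&` y.1, x.2 `&` y.2).
Definition jp (x y : A * B) := (x.1 `|` y.1, x.2 `|` y.2).

Lemma le_fold_mp1 z q0 s : (z <= (foldr mp q0 s).1) = (z <= q0.1) && all (fun q => z <= q.1) s.
Proof. by elim: s => [|q s IH] /=; rewrite ?andbT // lexI IH andbCA. Qed.
Lemma le_fold_mp2 z q0 s : (z <= (foldr mp q0 s).2) = (z <= q0.2) && all (fun q => z <= q.2) s.
Proof. by elim: s => [|q s IH] /=; rewrite ?andbT // lexI IH andbCA. Qed.
Lemma le_fold_jp1 z q0 s : ((foldr jp q0 s).1 <= z) = (q0.1 <= z) && all (fun q => q.1 <= z) s.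
Proof. by elim: s => [|q s IH] /=; rewrite ?andbT // leUx IH andbCA. Qed.
Lemma le_fold_jp2 z q0 s : ((foldr jp q0 s).2 <= z) = (q0.2 <= z) && all (fun q => q.2 <= z) s.
Proof. by elim: s => [|q s IH] /=; rewrite ?andbT // leUx IH andbCA. Qed.

Lemma fold_mp_le q0 s : ((foldr mp q0 s).1 <= q0.1) /\ ((foldr mp q0 s).2 <= q0.2) /\
  forall q, q \in s -> ((foldr mp q0 s).1 <= q.1) /\ ((foldr mp q0 s).2 <= q.2).
Proof.
have := le_fold_mp1 (foldr mp q0 s).1 q0 s; have := le_fold_mp2 (foldr mp q0 s).2 q0 s.
rewrite !lexx => /esym/andP[H2 /allP A2] /esym/andP[H1 /allP A1].
by split=> //; split=> // q qs; split; [apply: A1 | apply: A2].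
Qed.
Lemma fold_jp_ge q0 s : (q0.1 <= (foldr jp q0 s).1) /\ (q0.2 <= (foldr jp q0 s).2) /\
  forall q, q \in s -> (q.1 <= (foldr jp q0 s).1) /\ (q.2 <= (foldr jp q0 s).2).
Proof.
have := le_fold_jp1 (foldr jp q0 s).1 q0 s; have := le_fold_jp2 (foldr jp q0 s).2 q0 s.
rewrite !lexx => /esym/andP[H2 /allP A2] /esym/andP[H1 /allP A1].
by split=> //; split=> // q qs; split; [apply: A1 | apply: A2].
Qed.

Variable Cp : A * B -> Prop.
Hypothesis CpI : forall x y, Cp x -> Cp y -> Cp (mp x y).
Hypothesis CpU : forall x y, Cp x -> Cp y -> Cp (jp x y).
Lemma Cp_fold_mp q0 s : Cp q0 -> (forall q, q \in s -> Cp q) -> Cp (foldr mp q0 s).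
Proof.
move=> H0; elim: s => [|q s IH] //= Hs; apply: CpI; first by apply: Hs; rewrite mem_head.
by apply: IH => r rs; apply: Hs; rewrite in_cons rs orbT.
Qed.
Lemma Cp_fold_jp q0 s : Cp q0 -> (forall q, q \in s -> Cp q) -> Cp (foldr jp q0 s).
Proof.
move=> H0; elim: s => [|q s IH] //= Hs; apply: CpU; first by apply: Hs; rewrite mem_head.
by apply: IH => r rs; apply: Hs; rewrite in_cons rs orbT.
Qed.
End Fold.
Arguments mp {dA dB A B} x y.
Arguments jp {dA dB A B} x y.

Section Half.
Variables (dA dB dD : Order.disp_t) (A : latticeType dA) (B : latticeType dB) (D : tbLatticeType dD).
Variables (P : seq D) (X : seq A) (Y : seq B) (g : A -> D) (h : B -> D).
Hypothesis genX : lattice_generated_by X.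
Hypothesis genY : lattice_generated_by Y.
Hypothesis genP : lattice_generated_by P.
Hypothesis dean : dean_condition P.
Hypothesis gI : forall x y, g (x `&` y) = g x `&` g y.
Hypothesis gU : forall x y, g (x `|` y) = g x `|` g y.
Hypothesis hI : forall x y, h (x `&` y) = h x `&` h y.
Hypothesis hU : forall x y, h (x `|` y) = h x `|` h y.
Variables (ag : D -> A) (bh : D -> B).
Hypothesis agP : forall dd x, (x <= ag dd) <-> (g x <= dd).
Hypothesis bhP : forall dd y, (bh dd <= y) <-> (dd <= h y).
Hypothesis ag_eq : forall dd, g (ag dd) = dd.
Hypothesis bh_eq : forall dd, h (bh dd) = dd.
Variable Cp : A * B -> Prop.
Hypothesis CpI : forall x y, Cp x -> Cp y -> Cp (mp x y).
Hypothesis CpU : forall x y, Cp x -> Cp y -> Cp (jp x y).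
Hypothesis CpP : forall p, In p P -> Cp (ag p, bh p).
Hypothesis CpX : forall x, In x X -> Cp (x, bh (g x)).
Hypothesis CpY : forall y, In y Y -> Cp (ag (h y), y).

Lemma meetS2 (d1 d2 : D) : \meet_(s <- [:: d1; d2]) s = d1 `&` d2.
Proof. by rewrite !big_cons big_nil meetx1. Qed.
Lemma joinS2 (d1 d2 : D) : \join_(s <- [:: d1; d2]) s = d1 `|` d2.
Proof. by rewrite !big_cons big_nil joinx0. Qed.

Lemma M_all d : Cp (ag d, bh d).
Proof.
elim: (genP d) => {d} [p pP | d1 d2 _ IH1 _ IH2 | d1 d2 _ IH1 _ IH2].
- exact: CpP.
- set d := d1 `&` d2.
  set L := [seq (ag p, bh p) | p <- [seq p <- P | d <= p]] ++
           [seq (ag (h y), y) | y <- [seq y <- Y | d <= h y]].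
  set q0 := mp (ag d1, bh d1) (ag d2, bh d2).
  have memL : forall q, q \in L -> (exists2 p, (d <= p) && (p \in P) & q = (ag p, bh p)) \/
                                   (exists2 y, (d <= h y) && (y \in Y) & q = (ag (h y), y)).
    move=> q; rewrite mem_cat => /orP[] /mapP[z]; rewrite mem_filter => Hz ->;
      [left | right]; by exists z.
  have Cm : Cp (foldr mp q0 L).
    apply: Cp_fold_mp => //; first by apply: CpI.
    move=> q /memL [[p /andP[_ /InE pP] ->]|[y /andP[_ /InE yY] ->]]; [exact: CpP | exact: CpY].
  have [F1 [F2 F3]] := fold_mp_le q0 L.
  suff <- : foldr mp q0 L = (ag d, bh d) by [].
  case E: (foldr mp q0 L) F1 F2 F3 => [u v] /= F1 F2 F3.
  congr (_, _).
  + apply/le_anti/andP; split.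
    * apply/agP; apply: le_trans (_ : g (ag d1 `&` ag d2) <= d).
        move/meet_idPl: F1 => <-; rewrite gI; exact: leIr.
      by rewrite gI !ag_eq.
    * have := le_fold_mp1 (ag d) q0 L; rewrite E /= => ->.
      apply/andP; split.
        by rewrite lexI; apply/andP; split; apply/agP; rewrite ag_eq ?leIl ?leIr.
      apply/allP=> q /memL [[p /andP[Hp _] ->]|[y /andP[Hy _] ->]] /=;
        by apply/agP; rewrite ag_eq.
  + have key : forall b, d <= h b -> v <= b.
      move=> b; elim: (genY b) => {b} [y yY | b1 b2 _ K1 _ K2 | b1 b2 _ K1 _ K2] Hd.
      * have /F3 [_ //] : (ag (h y), y) \in L.
        rewrite mem_cat; apply/orP; right.
        by apply/mapP; exists y => //; rewrite mem_filter Hd; apply/InE.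
      * rewrite hI lexI in Hd; case/andP: Hd => /K1 H1 /K2 H2.
        by rewrite lexI H1 H2.
      * rewrite hU in Hd.
        have vd1 : v <= bh d1 by apply: le_trans F2 _; exact: leIl.
        have vd2 : v <= bh d2 by apply: le_trans F2 _; exact: leIr.
        have := dean (S:=[:: d1; d2]) (T:=[:: h b1; h b2]); rewrite meetS2 joinS2.
        case/(_ Hd) => [[s Hs Hle]|[[t Ht Hle]|[p pP /andP[Hdp Hpb]]]].
        -- case: Hs Hle => [<-|[<-|[]]] Hle.
           ++ by apply: le_trans vd1 _; apply/bhP; rewrite hU.
           ++ by apply: le_trans vd2 _; apply/bhP; rewrite hU.
        -- case: Ht Hle => [<-|[<-|[]]] Hle.
           ++ by apply: le_trans (K1 Hle) _; exact: leUl.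
           ++ by apply: le_trans (K2 Hle) _; exact: leUr.
        -- have Hv : v <= bh p.
             have /F3 [_ //] : (ag p, bh p) \in L.
             rewrite mem_cat; apply/orP; left.
             by apply/mapP; exists p => //; rewrite mem_filter Hdp; apply/InE.
           by apply: le_trans Hv _; apply/bhP; rewrite hU.
    apply/le_anti/andP; split; first by apply: key; rewrite bh_eq.
    have := le_fold_mp2 (bh d) q0 L; rewrite E /= => ->.
    apply/andP; split.
      by rewrite lexI; apply/andP; split; apply/bhP; rewrite bh_eq ?leIl ?leIr.
    apply/allP=> q /memL [[p /andP[Hp _] ->]|[y /andP[Hy _] ->]] /=;
      by apply/bhP; rewrite ?bh_eq.
- set d := d1 `|` d2.
  set L := [seq (ag p, bh p) | p <- [seq p <- P | p <= d]] ++
           [seq (x, bh (g x)) | x <- [seq x <- X | g x <= d]].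
  set q0 := jp (ag d1, bh d1) (ag d2, bh d2).
  have memL : forall q, q \in L -> (exists2 p, (p <= d) && (p \in P) & q = (ag p, bh p)) \/
                                   (exists2 x, (g x <= d) && (x \in X) & q = (x, bh (g x))).
    move=> q; rewrite mem_cat => /orP[] /mapP[z]; rewrite mem_filter => Hz ->;
      [left | right]; by exists z.
  have Cm : Cp (foldr jp q0 L).
    apply: Cp_fold_jp => //; first by apply: CpU.
    move=> q /memL [[p /andP[_ /InE pP] ->]|[x /andP[_ /InE xX] ->]]; [exact: CpP | exact: CpX].
  have [F1 [F2 F3]] := fold_jp_ge q0 L.
  suff <- : foldr jp q0 L = (ag d, bh d) by [].
  case E: (foldr jp q0 L) F1 F2 F3 => [u v] /= F1 F2 F3.
  congr (_, _).
  + have key : forall a, g a <= d -> a <= u.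
      move=> a; elim: (genX a) => {a} [x xX | a1 a2 _ K1 _ K2 | a1 a2 _ K1 _ K2] Hd.
      * have /F3 [// _] : (x, bh (g x)) \in L.
        rewrite mem_cat; apply/orP; right.
        by apply/mapP; exists x => //; rewrite mem_filter Hd; apply/InE.
      * rewrite gI in Hd.
        have ud1 : ag d1 <= u by apply: le_trans _ F1; exact: leUl.
        have ud2 : ag d2 <= u by apply: le_trans _ F1; exact: leUr.
        have := dean (S:=[:: g a1; g a2]) (T:=[:: d1; d2]); rewrite meetS2 joinS2.
        case/(_ Hd) => [[s Hs Hle]|[[t Ht Hle]|[p pP /andP[Hdp Hpb]]]].
        -- case: Hs Hle => [<-|[<-|[]]] Hle.
           ++ by apply: le_trans (K1 Hle); exact: leIl.
           ++ by apply: le_trans (K2 Hle); exact: leIr.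
        -- case: Ht Hle => [<-|[<-|[]]] Hle.
           ++ by apply: le_trans ud1; apply/agP; rewrite gI.
           ++ by apply: le_trans ud2; apply/agP; rewrite gI.
        -- have Hv : ag p <= u.
             have /F3 [// _] : (ag p, bh p) \in L.
             rewrite mem_cat; apply/orP; left.
             by apply/mapP; exists p => //; rewrite mem_filter Hpb; apply/InE.
           by apply: le_trans Hv; apply/agP; rewrite gI.
      * rewrite gU leUx in Hd; case/andP: Hd => /K1 H1 /K2 H2.
        by rewrite leUx H1 H2.
    apply/le_anti/andP; split; last by apply: key; rewrite ag_eq.
    have := le_fold_jp1 (ag d) q0 L; rewrite E /= => ->.
    apply/andP; split.
      by rewrite leUx; apply/andP; split; apply/agP; rewrite ag_eq ?leUl ?leUr.
    apply/allP=> q /memL [[p /andP[Hp _] ->]|[x /andP[Hx _] ->]] /=;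
      by apply/agP; rewrite ?ag_eq.
  + apply/le_anti/andP; split.
      have := le_fold_jp2 (bh d) q0 L; rewrite E /= => ->.
      apply/andP; split.
        by rewrite leUx; apply/andP; split; apply/bhP; rewrite bh_eq ?leUl ?leUr.
      apply/allP=> q /memL [[p /andP[Hp _] ->]|[x /andP[Hx _] ->]] /=;
        by apply/bhP; rewrite bh_eq.
    apply/bhP; move/join_idPr: (F2) => E2; rewrite -E2 !hU !bh_eq; exact: leUl.
Qed.
End Half.

Section ASide.
Variables (dA dB dD : Order.disp_t) (A : latticeType dA) (B : latticeType dB) (D : tbLatticeType dD).
Variables (X : seq A) (g : A -> D) (h : B -> D).
Hypothesis genX : lattice_generated_by X.
Hypothesis gI : forall x y, g (x `&` y) = g x `&` g y.
Hypothesis gU : forall x y, g (x `|` y) = g x `|` g y.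
Hypothesis hI : forall x y, h (x `&` y) = h x `&` h y.
Hypothesis hU : forall x y, h (x `|` y) = h x `|` h y.
Variables (ag bg : D -> A) (ah bh : D -> B).
Hypothesis agP : forall dd x, (x <= ag dd) <-> (g x <= dd).
Hypothesis bgP : forall dd x, (bg dd <= x) <-> (dd <= g x).
Hypothesis ahP : forall dd y, (y <= ah dd) <-> (h y <= dd).
Hypothesis bhP : forall dd y, (bh dd <= y) <-> (dd <= h y).
Hypothesis ah_eq : forall dd, h (ah dd) = dd.
Hypothesis bh_eq : forall dd, h (bh dd) = dd.
Variable Cp : A * B -> Prop.
Hypothesis CpI : forall x y, Cp x -> Cp y -> Cp (mp x y).
Hypothesis CpU : forall x y, Cp x -> Cp y -> Cp (jp x y).
Hypothesis Mall : forall d, Cp (ag d, bh d).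
Hypothesis Nall : forall d, Cp (bg d, ah d).
Hypothesis CX1 : forall x, In x X -> Cp (x, bh (g x)).
Hypothesis CX2 : forall x, In x X -> Cp (x, ah (g x)).

Lemma a_side a : Cp (a, bh (g a)) /\ Cp (a, ah (g a)).
Proof.
elim: (genX a) => {a} [x xX | a1 a2 _ [M1 N1] _ [M2 N2] | a1 a2 _ [M1 N1] _ [M2 N2]].
- by split; [apply: CX1 | apply: CX2].
- split.
  + have := CpI (CpI M1 M2) (Mall (g (a1 `&` a2))); rewrite /mp /=.
    congr Cp; congr (_, _).
      by apply/meet_idPl/agP.
    apply/meet_idPr; rewrite lexI; apply/andP; split; apply/bhP; rewrite bh_eq gI ?leIl ?leIr //.
  + have := CpU (CpI N1 N2) (Nall (g (a1 `&` a2))); rewrite /mp /jp /=.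
    congr Cp; congr (_, _).
      by apply/join_idPl/bgP.
    by apply/join_idPr/ahP; rewrite hI !ah_eq gI.
- split.
  + have := CpI (CpU M1 M2) (Mall (g (a1 `|` a2))); rewrite /mp /jp /=.
    congr Cp; congr (_, _).
      by apply/meet_idPl/agP.
    by apply/meet_idPr/bhP; rewrite hU !bh_eq gU.
  + have := CpU (CpU N1 N2) (Nall (g (a1 `|` a2))); rewrite /jp /=.
    congr Cp; congr (_, _).
      by apply/join_idPl/bgP.
    apply/join_idPr; rewrite leUx; apply/andP; split; apply/ahP; rewrite ah_eq gU ?leUl ?leUr //.
Qed.
End ASide.

Lemma lower_fun dA dD (A : latticeType dA) (D : tbLatticeType dD) (g : A -> D) :
  lattice_epi g -> lower_bounded g ->
  exists f : D -> A, (forall dd x, f dd <= x <-> dd <= g x) /\ (forall dd, g (f dd) = dd).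
Proof.
move=> [[gI gU] gs] lb.
have mono : forall x y, x <= y -> g x <= g y.
  by move=> x y /meet_idPl E; rewrite -E gI leIr.
have H : forall dd, {x0 | dd <= g x0 /\ forall x, dd <= g x -> x0 <= x}.
  move=> dd; apply: constructive_indefinite_description.
  case: (lb dd) => // Hn; exfalso; case: (gs dd) => x Ex; apply: (Hn x); by rewrite Ex.
exists (fun dd => sval (H dd)); split.
- move=> dd x; case: (H dd) => x0 [H1 H2] /=; split; last exact: H2.
  by move=> /mono; apply: le_trans.
- move=> dd; case: (H dd) => x0 [H1 H2] /=; apply/le_anti; rewrite H1 andbT.
  by case: (gs dd) => x Ex; rewrite -Ex; apply: mono; apply: H2; rewrite Ex.
Qed.

Lemma upper_fun dA dD (A : latticeType dA) (D : tbLatticeType dD) (g : A -> D) :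
  lattice_epi g -> upper_bounded g ->
  exists f : D -> A, (forall dd x, x <= f dd <-> g x <= dd) /\ (forall dd, g (f dd) = dd).
Proof.
move=> [[gI gU] gs] lb.
have mono : forall x y, x <= y -> g x <= g y.
  by move=> x y /meet_idPl E; rewrite -E gI leIr.
have H : forall dd, {x0 | g x0 <= dd /\ forall x, g x <= dd -> x <= x0}.
  move=> dd; apply: constructive_indefinite_description.
  case: (lb dd) => // Hn; exfalso; case: (gs dd) => x Ex; apply: (Hn x); by rewrite Ex.
exists (fun dd => sval (H dd)); split.
- move=> dd x; case: (H dd) => x0 [H1 H2] /=; split; last exact: H2.
  by move=> /mono Hx; apply: le_trans Hx H1.
- move=> dd; case: (H dd) => x0 [H1 H2] /=; apply/le_anti; rewrite H1 /=.
  by case: (gs dd) => x Ex; rewrite -Ex; apply: mono; apply: H2; rewrite Ex.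
Qed.

Theorem mainTheorem1 (dA dB dD : Order.disp_t)
    (A : latticeType dA) (B : latticeType dB) (D : tbLatticeType dD)
    (P : seq D) (g : A -> D) (h : B -> D) :
  fg_lattice A -> fg_lattice B ->
  lattice_generated_by P -> dean_condition P ->
  lattice_epi g -> bounded_hom g ->
  lattice_epi h -> bounded_hom h ->
  fiber_product_fg g h.
Proof.
move=> [X genX] [Y genY] genP dean epg [glb gub] eph [hlb hub].
have [bg [bgP bg_eq]] := lower_fun epg glb.
have [ag [agP ag_eq]] := upper_fun epg gub.
have [bh [bhP bh_eq]] := lower_fun eph hlb.
have [ah [ahP ah_eq]] := upper_fun eph hub.
case: epg => [[gI gU] _]; case: eph => [[hI hU] _].
pose Q := [seq (ag p, bh p) | p <- P] ++ [seq (bg p, ah p) | p <- P] ++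
          [seq (x, bh (g x)) | x <- X] ++ [seq (x, ah (g x)) | x <- X] ++
          [seq (bg (h y), y) | y <- Y] ++ [seq (ag (h y), y) | y <- Y].
have QC : forall q, In q Q -> g q.1 = h q.2.
  move=> q /InE; rewrite !mem_cat => /orP[|/orP[|/orP[|/orP[|/orP[]]]]] /mapP[z _ ->] /=;
    by rewrite ?ag_eq ?bg_eq ?ah_eq ?bh_eq.
exists Q; split => //.
pose Cp := genby (fun x y : A * B => (x.1 `&` y.1, x.2 `&` y.2))
                 (fun x y : A * B => (x.1 `|` y.1, x.2 `|` y.2)) Q.
have CpI : forall x y, Cp x -> Cp y -> Cp (mp x y) by move=> x y; exact: genby_meet.
have CpU : forall x y, Cp x -> Cp y -> Cp (jp x y) by move=> x y; exact: genby_join.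
have inQ : forall q, q \in Q -> Cp q by move=> q /InE; exact: genby_base.
pose Cs := fun q : B * A => Cp (q.2, q.1).
have CsI : forall x y, Cs x -> Cs y -> Cs (mp x y) by move=> x y; exact: genby_meet.
have CsU : forall x y, Cs x -> Cs y -> Cs (jp x y) by move=> x y; exact: genby_join.
have Mall : forall d, Cp (ag d, bh d).
  apply: (M_all genX genY genP dean gI gU hI hU agP bhP ag_eq bh_eq CpI CpU).
  - by move=> p /InE pP; apply: inQ; rewrite !mem_cat map_f.
  - by move=> x /InE xX; apply: inQ; rewrite !mem_cat map_f ?orbT.
  - by move=> y /InE yY; apply: inQ; rewrite !mem_cat map_f ?orbT.
have Nall : forall d, Cs (ah d, bg d).
  apply: (M_all genY genX genP dean hI hU gI gU ahP bgP ah_eq bg_eq CsI CsU).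
  - by move=> p /InE pP; apply: inQ; rewrite !mem_cat map_f ?orbT.
  - by move=> x /InE xX; apply: inQ; rewrite !mem_cat map_f ?orbT.
  - by move=> y /InE yY; apply: inQ; rewrite !mem_cat map_f ?orbT.
move=> c; split; last first.
  elim=> [q /QC //| x y _ Ex _ Ey | x y _ Ex _ Ey] /=.
  + by rewrite gI hI Ex Ey.
  + by rewrite gU hU Ex Ey.
case: c => a b /= E.
  have X1 : forall x, In x X -> Cp (x, bh (g x)).
    by move=> x /InE xX; apply: inQ; rewrite !mem_cat map_f ?orbT.
  have X2 : forall x, In x X -> Cp (x, ah (g x)).
    by move=> x /InE xX; apply: inQ; rewrite !mem_cat map_f ?orbT.
  have Y1 : forall y, In y Y -> Cs (y, bg (h y)).
    by move=> y /InE yY; apply: inQ; rewrite !mem_cat map_f ?orbT.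
  have Y2 : forall y, In y Y -> Cs (y, ag (h y)).
    by move=> y /InE yY; apply: inQ; rewrite !mem_cat map_f ?orbT.
  have [Ha _] := a_side genX gI gU hI hU agP bgP ahP bhP ah_eq bh_eq CpI CpU Mall Nall X1 X2 a.
  have [Hb _] := a_side genY hI hU gI gU ahP bhP agP bgP ag_eq bg_eq CsI CsU Nall Mall Y1 Y2 b.
  have := CpU _ (bg (h b), b) Ha Hb; rewrite /jp /= -E.
  congr Cp; congr (_, _).
    by apply/join_idPl/bgP.
  by apply/join_idPr/bhP; rewrite E.
Qed.
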